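(* Let $\mathcal{S}$ be an inverse semigroupoid, $X$ a partially ordered set and $\theta$ an ordered partial action of $\mathcal{S}$ on $X$, and let $(\eta,E,i)$ be given by the globalization construction. Then the relation on $E$ defined by $[s,x]\leqslant[t,y]$ iff there exist $(r,y')\in D$ and $x'\in X$ with $(r,y')\approx(t,y)$, $x'\leqslant y'$ and $(r,x')\approx(s,x)$, is a well-defined partial order on $E$. Moreover, with this order each $E_s$ is an order ideal of $E$ and each $\eta_s$ is order preserving, so that $\eta$ is an ordered global action of $\mathcal{S}$ on $E$.
   Context: Inverse semigroupoid: arrows $\mathcal{S}$, objects $\mathcal{S}^{(0)}$, maps $d,c$, associative multiplication on $\mathcal{S}^{(2)}=\{(s,t):d(s)=c(t)\}$ with $d(st)=d(t)$, $c(st)=c(s)$, and unique $s^*$ with $ss^*s=s$, $s^*ss^*=s^*$; $E(\mathcal{S})$ = idempotents; natural partial order $s\leqslant t$ (for parallel $s,t$) iff $s=te$ for an idempotent $e$ with $(t,e)\in\mathcal{S}^{(2)}$. A partial action of $\mathcal{S}$ on a set $X$ is a pair $(\{X_s\},\{\theta_s\})$ of subsets $X_s\subseteq X$ and maps $\theta_s:X_{s^*}\to X_s$ such that: each $\theta_s$ is a bijection with $\theta_s^{-1}=\theta_{s^*}$ and $X=\bigcup_s X_s$; $\theta_s\circ\theta_t\subseteq\theta_{st}$ as partial maps for $(s,t)\in\mathcal{S}^{(2)}$; $X_s\subseteq X_t$ whenever $s\leqslant t$. It is global if $\theta_s\circ\theta_t=\theta_{st}$ for all $(s,t)\in\mathcal{S}^{(2)}$.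 When $X$ is a poset, it is an ordered partial action if each $X_s$ is an order ideal of $X$ and each $\theta_s$ is an order isomorphism. Globalization construction: let $D=\{(s,x)\in\mathcal{S}\times X: x\in X_{s^*s}\}$. Define $(s,x)\sim(t,y)$ on $D$ iff either (R1) $(t^*,s)\in\mathcal{S}^{(2)}$, $x\in X_{s^*t}$ and $\theta_{t^*s}(x)=y$; or (R2) $s,t\in E(\mathcal{S})$ and $x=y$. Let $\approx$ be the equivalence relation on $D$ generated by $\sim$, $E=D/{\approx}$, and $[s,x]$ the class of $(s,x)$. For $s\in\mathcal{S}$ put $D_s=\{(p,x)\in D:(s^*,p)\in\mathcal{S}^{(2)},\ x\in X_{p^*ss^*p}\}$, $E_s=\{[p,x]:(p,x)\in D_s\}$, and $\eta_s:E_{s^*}\to E_s$, $\eta_s([p,x])=[sp,x]$ for $(p,x)\in D_{s^*}$. Define $i:X\to E$ by $i(x)=[e,x]$ for any $e\in E(\mathcal{S})$ with $x\in X_e$. (These are well defined, $\eta=(\{E_s\},\{\eta_s\})$ is a global action of $\mathcal{S}$ on $E$, and $i$ is injective and equivariant.) *)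

(* Defs.v *)
From Stdlib Require Import Relations.

Record invSemigroupoid := InvSemigroupoid {
  arr : Type;
  obj : Type;
  dom : arr -> obj;
  cod : arr -> obj;
  mul : arr -> arr -> arr;         (* meaningful only on S^(2) *)
  star : arr -> arr;
  dom_mul : forall s t, dom s = cod t -> dom (mul s t) = dom t;
  cod_mul : forall s t, dom s = cod t -> cod (mul s t) = cod s;
  mul_assoc : forall s t u, dom s = cod t -> dom t = cod u ->
      mul (mul s t) u = mul s (mul t u);
  dom_star : forall s, dom (star s) = cod s;
  cod_star : forall s, cod (star s) = dom s;
  star_l : forall s, mul (mul s (star s)) s = s;
  star_r : forall s, mul (mul (star s) s) (star s) = star s;
  star_unique : forall s u, dom u = cod s -> cod u = dom s ->
      mul (mul s u) s = s -> mul (mul u s) u = u -> u = star s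
}.

Arguments dom {_} s.
Arguments cod {_} s.
Arguments mul {_} s t.
Arguments star {_} s.

Definition composable {S : invSemigroupoid} (s t : arr S) : Prop := dom s = cod t.

Definition idem {S : invSemigroupoid} (e : arr S) : Prop :=
  composable e e /\ mul e e = e.

Definition natle {S : invSemigroupoid} (s t : arr S) : Prop :=
  dom s = dom t /\ cod s = cod t /\
  exists e, idem e /\ composable t e /\ s = mul t e.

Record ordPartialAction (S : invSemigroupoid) := OrdPartialAction {
  pt : Type;
  le : pt -> pt -> Prop;
  le_refl : forall x, le x x;
  le_antisym : forall x y, le x y -> le y x -> x = y;
  le_trans : forall x y z, le x y -> le y z -> le x z;
  Xs : arr S -> pt -> Prop;
  theta : arr S -> pt -> pt;                (* theta_s : X_{s*} -> X_s *)
  theta_maps : forall s x, Xs (star s) x -> Xs s (theta s x);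
  theta_inv_maps : forall s y, Xs s y -> Xs (star s) (theta (star s) y);
  theta_inv_l : forall s x, Xs (star s) x -> theta (star s) (theta s x) = x;
  theta_inv_r : forall s y, Xs s y -> theta s (theta (star s) y) = y;
  Xs_cover : forall x, exists s, Xs s x;
  theta_comp : forall s t x, composable s t ->
      Xs (star t) x -> Xs (star s) (theta t x) ->
      Xs (star (mul s t)) x /\ theta (mul s t) x = theta s (theta t x);
  Xs_mono : forall s t x, natle s t -> Xs s x -> Xs t x;
  Xs_ideal : forall s x y, Xs s y -> le x y -> Xs s x;
  theta_order : forall s x y, Xs (star s) x -> Xs (star s) y ->
      (le x y <-> le (theta s x) (theta s y))
}.

Arguments pt {_} _.
Arguments le {_ _} x y.
Arguments Xs {_ _} s x.
Arguments theta {_ _} s x.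

(** * Globalization construction (at the level of representatives) *)
Section Glob.
Context {S : invSemigroupoid} (A : ordPartialAction S).

Definition Dg (p : arr S * pt A) : Prop := Xs (mul (star (fst p)) (fst p)) (snd p).

Definition sim (p q : arr S * pt A) : Prop :=
  let (s, x) := p in let (t, y) := q in
  (composable (star t) s /\ Xs (mul (star s) t) x /\ theta (mul (star t) s) x = y)
  \/ (idem s /\ idem t /\ x = y).

Definition simD (p q : arr S * pt A) : Prop := Dg p /\ Dg q /\ sim p q.

Definition approx (p q : arr S * pt A) : Prop :=
  Dg p /\ Dg q /\ clos_refl_sym_trans _ simD p q.

(** D_s; its image in E is E_s *)
Definition Ds (s : arr S) (p : arr S * pt A) : Prop :=
  Dg p /\ composable (star s) (fst p) /\
  Xs (mul (mul (star (fst p)) s) (mul (star s) (fst p))) (snd p).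

(** membership of the class of p in E_s *)
Definition inE (s : arr S) (p : arr S * pt A) : Prop :=
  exists q, Ds s q /\ approx q p.

(** eta_s on representatives in D_{s*} *)
Definition eta (s : arr S) (p : arr S * pt A) : arr S * pt A :=
  (mul s (fst p), snd p).

Definition leE (p q : arr S * pt A) : Prop :=
  exists r y' x', Dg (r, y') /\ approx (r, y') q /\ le x' y' /\ approx (r, x') p.

End Glob.

(* Main.v *)
Require Import Defs.
From Stdlib Require Import Relations.

Lemma dM {S : invSemigroupoid} (s t : arr S) : dom s = cod t -> dom (mul s t) = dom t.
Proof. apply dom_mul. Qed.
Lemma cM {S : invSemigroupoid} (s t : arr S) : dom s = cod t -> cod (mul s t) = cod s.
Proof. apply cod_mul. Qed.
Lemma dS {S : invSemigroupoid} (s : arr S) : dom (star s) = cod s.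
Proof. apply dom_star. Qed.
Lemma cS {S : invSemigroupoid} (s : arr S) : cod (star s) = dom s.
Proof. apply cod_star. Qed.
Lemma mA {S : invSemigroupoid} (s t u : arr S) : dom s = cod t -> dom t = cod u ->
  mul (mul s t) u = mul s (mul t u).
Proof. apply mul_assoc. Qed.

Ltac dcs := unfold composable, idem in *; rewrite ?dS, ?cS in *;
  repeat first [ rewrite dM by dcs | rewrite cM by dcs | rewrite dS | rewrite cS ];
  congruence.

Ltac ra := repeat (rewrite mA by dcs).

Lemma star_star {S : invSemigroupoid} (s : arr S) : star (star s) = s.
Proof.
  symmetry. apply star_unique; rewrite ?dS, ?cS; auto; [apply star_r | apply star_l].
Qed.

Lemma idem_star {S : invSemigroupoid} (e : arr S) : idem e -> star e = e.
Proof.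
  intros [H1 H2]. symmetry. apply star_unique; auto; rewrite !H2; auto.
Qed.

Lemma sl {S : invSemigroupoid} (s : arr S) : mul s (mul (star s) s) = s.
Proof. rewrite <- mA by dcs. apply star_l. Qed.
Lemma sr {S : invSemigroupoid} (s : arr S) : mul (star s) (mul s (star s)) = star s.
Proof. rewrite <- mA by dcs. apply star_r. Qed.
Lemma slr {S : invSemigroupoid} (s r : arr S) : dom s = cod r ->
  mul s (mul (star s) (mul s r)) = mul s r.
Proof. intros. rewrite <- (mA (star s) s r) by dcs. rewrite <- (mA s (mul (star s) s) r) by dcs. now rewrite sl. Qed.
Lemma srr {S : invSemigroupoid} (s r : arr S) : cod s = cod r ->
  mul (star s) (mul s (mul (star s) r)) = mul (star s) r.
Proof. intros. rewrite <- (mA s (star s) r) by dcs. rewrite <- (mA (star s) (mul s (star s)) r) by dcs. now rewrite sr. Qed.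
Lemma absorb {S : invSemigroupoid} (e r : arr S) : idem e -> dom e = cod r ->
  mul e (mul e r) = mul e r.
Proof. intros [H1 H2] H. rewrite <- mA by dcs. now rewrite H2. Qed.

Lemma idem_mul {S : invSemigroupoid} (e f : arr S) : idem e -> idem f -> dom e = dom f ->
  idem (mul e f).
Proof.
  intros He Hf Hef. pose proof He as [He1 He2]. pose proof Hf as [Hf1 Hf2].
  unfold composable in *.
  set (x := star (mul e f)).
  assert (H1 : mul (mul (mul e f) x) (mul e f) = mul e f) by apply star_l.
  assert (H2 : mul (mul x (mul e f)) x = x) by apply star_r.
  assert (Dx : dom x = dom e) by (unfold x; dcs).
  assert (Cx : cod x = dom e) by (unfold x; dcs).
  assert (Hx : mul (mul f x) e = x).
  { unfold x. apply star_unique; try dcs.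
    - fold x. transitivity (mul (mul (mul e f) x) (mul e f)); [|exact H1].
      ra. rewrite (absorb f) by (auto; dcs). rewrite (absorb e) by (auto; dcs). reflexivity.
    - fold x. transitivity (mul (mul f (mul (mul x (mul e f)) x)) e); [|now rewrite H2].
      ra. rewrite (absorb e) by (auto; dcs). rewrite (absorb f) by (auto; dcs). reflexivity. }
  assert (Hxx : mul x x = x).
  { transitivity (mul (mul (mul f x) e) (mul (mul f x) e)); [now rewrite Hx|].
    transitivity (mul (mul f (mul (mul x (mul e f)) x)) e); [ra; reflexivity|].
    now rewrite H2. }
  assert (Ix : idem x) by (split; [unfold composable; congruence | exact Hxx]).
  assert (E : mul e f = x).
  { rewrite <- (idem_star x Ix). unfold x. symmetry; apply star_star. }
  rewrite E. exact Ix.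
Qed.

Lemma idem_comm {S : invSemigroupoid} (e f : arr S) : idem e -> idem f -> dom e = dom f ->
  mul e f = mul f e.
Proof.
  intros He Hf Hef.
  pose proof (idem_mul e f He Hf Hef) as Ief.
  pose proof (idem_mul f e Hf He (eq_sym Hef)) as Ife.
  pose proof He as [He1 He2]. pose proof Hf as [Hf1 Hf2]. unfold composable in *.
  rewrite <- (idem_star _ Ief). symmetry. apply star_unique; try dcs.
  - transitivity (mul (mul e f) (mul e f)); [|apply Ief].
    ra. rewrite (absorb f) by (auto; dcs). rewrite (absorb e) by (auto; dcs). reflexivity.
  - transitivity (mul (mul f e) (mul f e)); [|apply Ife].
    ra. rewrite (absorb e) by (auto; dcs). rewrite (absorb f) by (auto; dcs). reflexivity.
Qed.

Lemma sidem {S : invSemigroupoid} (s : arr S) : idem (mul (star s) s).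
Proof.
  split; [unfold composable; dcs|]. rewrite <- mA by dcs. now rewrite star_r.
Qed.
Lemma sidem' {S : invSemigroupoid} (s : arr S) : idem (mul s (star s)).
Proof. pose proof (sidem (star s)) as H. now rewrite star_star in H. Qed.

Lemma star_mul {S : invSemigroupoid} (s t : arr S) : dom s = cod t ->
  star (mul s t) = mul (star t) (star s).
Proof.
  intros H. symmetry. apply star_unique; try dcs.
  - transitivity (mul (mul s (mul (mul t (star t)) (mul (star s) s))) t); [ra; reflexivity|].
    rewrite (idem_comm (mul t (star t))) by (apply sidem' || apply sidem || dcs).
    ra. rewrite slr by dcs. rewrite sl. reflexivity.
  - transitivity (mul (mul (star t) (mul (mul (star s) s) (mul t (star t)))) (star s)); [ra; reflexivity|].
    rewrite (idem_comm (mul (star s) s)) by (apply sidem' || apply sidem || dcs).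
    ra. rewrite srr by dcs. rewrite sr. reflexivity.
Qed.

Ltac sc := first [assumption | apply sidem | apply sidem' | dcs].

Lemma key_e {S : invSemigroupoid} (s t : arr S) : cod s = cod t ->
  idem (mul (star s) (mul t (mul (star t) s))) /\
  mul s (mul (star s) (mul t (mul (star t) s))) = mul t (mul (star t) s).
Proof.
  intros H. split.
  - split; [unfold composable; dcs|].
    transitivity (mul (star s) (mul (mul (mul t (star t)) (mul s (star s))) (mul t (mul (star t) s)))); [ra; reflexivity|].
    rewrite (idem_comm (mul t (star t))) by sc.
    ra. rewrite srr by dcs. rewrite slr by dcs. reflexivity.
  - transitivity (mul (mul (mul s (star s)) (mul t (star t))) s); [ra; reflexivity|].
    rewrite (idem_comm (mul s (star s))) by sc.
    ra. rewrite sl. reflexivity.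
Qed.

Lemma natle_star {S : invSemigroupoid} (k m : arr S) : natle k m -> natle (star k) (star m).
Proof.
  intros (D & C & e & Ie & Ce & ->).
  pose proof Ie as [Ie1 Ie2]. unfold composable in *.
  split; [dcs|]. split; [dcs|].
  exists (mul (mul m e) (star (mul m e))). split; [apply sidem'|]. split; [dcs|].
  rewrite star_mul by dcs. rewrite (idem_star e Ie).
  ra. rewrite (absorb e) by (auto; dcs).
  symmetry. transitivity (mul (mul e (mul (star m) m)) (star m)).
  - rewrite (idem_comm e (mul (star m) m)) by sc. ra. reflexivity.
  - ra. rewrite sr. reflexivity.
Qed.

Lemma natle_ss {S : invSemigroupoid} (k m : arr S) : natle k m ->
  exists e, idem e /\ composable m e /\ k = mul m e /\ natle (mul (star k) k) e.
Proof.
  intros (D & C & e & Ie & Ce & ->). exists e. split; auto. split; auto. split; auto.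
  pose proof Ie as [Ie1 Ie2]. unfold composable in *.
  split; [dcs|]. split; [dcs|].
  exists (mul (star m) m). split; [apply sidem|]. split; [dcs|].
  rewrite star_mul by dcs. rewrite (idem_star e Ie).
  transitivity (mul e (mul (mul (star m) m) e)); [ra; reflexivity|].
  rewrite <- (idem_comm e (mul (star m) m)) by sc.
  rewrite <- mA by dcs. rewrite Ie2. reflexivity.
Qed.

Section Act.
Context {S : invSemigroupoid} {A : ordPartialAction S}.

Lemma theta_idem (e : arr S) (x : pt A) : idem e -> Xs e x -> theta e x = x.
Proof.
  intros Ie Hx. pose proof (idem_star e Ie) as Se. pose proof Ie as [Ie1 Ie2].
  assert (Hx' : Xs (star e) x) by now rewrite Se.
  assert (Hy : Xs (star e) (theta e x)) by (rewrite Se; apply theta_maps; auto).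
  destruct (theta_comp S A e e x Ie1 Hx' Hy) as [_ E]. rewrite Ie2 in E.
  transitivity (theta (star e) (theta e (theta e x))).
  - rewrite theta_inv_l by auto. reflexivity.
  - rewrite <- E. apply theta_inv_l; auto.
Qed.

Lemma X_sub (s : arr S) (y : pt A) : Xs s y -> Xs (mul s (star s)) y.
Proof.
  intros H.
  assert (H1 : Xs (star (star s)) y) by now rewrite star_star.
  assert (H2 : Xs (star s) (theta (star s) y)) by (apply theta_inv_maps; auto).
  destruct (theta_comp S A s (star s) y ltac:(unfold composable; dcs) H1 H2) as [H3 _].
  rewrite star_mul, star_star in H3 by dcs. exact H3.
Qed.

Lemma restrict (k m : arr S) (x : pt A) : natle k m -> Xs (star k) x ->
  Xs (star m) x /\ theta k x = theta m x.
Proof.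
  intros N Hx.
  assert (Hm : Xs (star m) x) by (apply (Xs_mono S A (star k)); auto; apply natle_star; auto).
  split; auto.
  destruct (natle_ss k m N) as (e & Ie & Ce & Ek & Nk).
  assert (Hkk : Xs (mul (star k) k) x).
  { pose proof (X_sub _ _ Hx) as H. rewrite star_star in H. exact H. }
  assert (He : Xs e x) by (apply (Xs_mono S A _ _ x Nk Hkk)).
  pose proof (idem_star e Ie) as Se.
  assert (He' : Xs (star e) x) by now rewrite Se.
  assert (Hm' : Xs (star m) (theta e x)) by (rewrite theta_idem; auto).
  destruct (theta_comp S A m e x Ce He' Hm') as [_ E].
  rewrite <- Ek in E. rewrite E. rewrite (theta_idem e x); auto.
Qed.

Definition IA (s : arr S) (x : pt A) (t : arr S) (y : pt A) : Prop :=
  composable (star t) s /\ Xs (mul (star s) t) x /\ theta (mul (star t) s) x = y.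
Definition IB (s : arr S) (x : pt A) (t : arr S) (y : pt A) : Prop :=
  Xs (star s) x /\ Xs (star t) y /\ theta s x = theta t y.
Definition Inv (p q : arr S * pt A) : Prop :=
  IA (fst p) (snd p) (fst q) (snd q) \/ IB (fst p) (snd p) (fst q) (snd q).

Lemma IA_sym s x t y : IA s x t y -> IA t y s x.
Proof.
  intros (H1 & H2 & H3). unfold composable in *.
  assert (H2' : Xs (star (mul (star t) s)) x) by (rewrite star_mul, star_star by dcs; auto).
  split; [dcs|]. split.
  - rewrite <- H3. apply theta_maps. auto.
  - rewrite <- H3. pose proof (theta_inv_l S A _ x H2') as E.
    rewrite star_mul, star_star in E by dcs. exact E.
Qed.

Lemma IA_trans s x t y u z : IA s x t y -> IA t y u z -> IA s x u z.
Proof.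
  intros (H1 & H2 & H3) (K1 & K2 & K3). unfold composable in *.
  assert (X1 : Xs (star (mul (star t) s)) x) by (rewrite star_mul, star_star by dcs; auto).
  assert (X2 : Xs (star (mul (star u) t)) (theta (mul (star t) s) x))
    by (rewrite H3, star_mul, star_star by dcs; auto).
  destruct (theta_comp S A (mul (star u) t) (mul (star t) s) x ltac:(unfold composable; dcs) X1 X2)
    as [Hk Ek].
  destruct (key_e s t ltac:(dcs)) as [Ie Ke].
  assert (N : natle (mul (mul (star u) t) (mul (star t) s)) (mul (star u) s)).
  { split; [dcs|]. split; [dcs|]. eexists. split; [exact Ie|]. split; [unfold composable; dcs|].
    ra. rewrite Ke. reflexivity. }
  destruct (restrict _ _ x N Hk) as [Hm Em].
  rewrite star_mul, star_star in Hm by dcs.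
  split; [dcs|]. split; auto. rewrite <- Em, Ek, H3. auto.
Qed.

Lemma IA_IB s x t y : IA s x t y -> Xs (star t) y -> Xs (star s) x /\ theta s x = theta t y.
Proof.
  intros (H1 & H2 & H3) Hy. unfold composable in *.
  assert (X1 : Xs (star (mul (star t) s)) x) by (rewrite star_mul, star_star by dcs; auto).
  assert (X2 : Xs (star t) (theta (mul (star t) s) x)) by (rewrite H3; auto).
  destruct (theta_comp S A t (mul (star t) s) x ltac:(unfold composable; dcs) X1 X2)
    as [Hk Ek].
  destruct (key_e s t ltac:(dcs)) as [Ie Ke].
  assert (N : natle (mul t (mul (star t) s)) s).
  { split; [dcs|]. split; [dcs|]. eexists. split; [exact Ie|]. split; [unfold composable; dcs|].
    rewrite Ke. reflexivity. }
  destruct (restrict _ _ x N Hk) as [Hm Em].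
  split; auto. rewrite <- Em, Ek, H3. auto.
Qed.

Lemma Inv_sym p q : Inv p q -> Inv q p.
Proof.
  destruct p as [s x], q as [t y]. unfold Inv; simpl. intros [H|(H1&H2&H3)].
  - left. apply IA_sym; auto.
  - right. split; auto.
Qed.

Lemma Inv_trans p q r : Inv p q -> Inv q r -> Inv p r.
Proof.
  destruct p as [s x], q as [t y], r as [u z]. unfold Inv; simpl.
  intros [H|H] [K|K].
  - left. eapply IA_trans; eauto.
  - destruct K as (K1 & K2 & K3). destruct (IA_IB _ _ _ _ H K1) as [L1 L2].
    right. split; auto. split; auto. congruence.
  - destruct H as (H1 & H2 & H3). destruct (IA_IB _ _ _ _ (IA_sym _ _ _ _ K) H2) as [L1 L2].
    right. split; auto. split; auto. congruence.
  - destruct H as (H1 & H2 & H3), K as (K1 & K2 & K3). right. split; auto. split; auto. congruence.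
Qed.

End Act.

Section G.
Context {S : invSemigroupoid} {A : ordPartialAction S}.

Notation crst := (clos_refl_sym_trans _ (simD A)).

Lemma Dg_ideal (a : arr S) (u w : pt A) : Dg A (a, u) -> le w u -> Dg A (a, w).
Proof. unfold Dg; simpl. intros. eapply Xs_ideal; eauto. Qed.

Lemma sXs (s t : arr S) (x : pt A) : dom (star t) = cod s ->
  Xs (star (mul (star t) s)) x <-> Xs (mul (star s) t) x.
Proof. intros. rewrite star_mul, star_star by dcs. tauto. Qed.

Lemma Inv_refl (p : arr S * pt A) : Dg A p -> Inv p p.
Proof.
  destruct p as [s x]. unfold Dg, Inv, IA; simpl. intros H. left.
  split; [unfold composable; dcs|]. split; auto. apply theta_idem; auto. apply sidem.
Qed.

Lemma sim_Inv p q : Dg A p -> Dg A q -> sim A p q -> Inv p q.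
Proof.
  destruct p as [s x], q as [t y]. unfold Dg, sim, Inv, IA, IB; simpl.
  intros Hp Hq [H|(Is & It & ->)]; [left; exact H|right].
  rewrite (idem_star s Is) in *. rewrite (idem_star t It) in *.
  pose proof Is as [_ Es]. pose proof It as [_ Et]. rewrite Es in Hp. rewrite Et in Hq.
  split; auto. split; auto. rewrite (theta_idem s y), (theta_idem t y); auto.
Qed.

Lemma approx_Inv p q : approx A p q -> Inv p q.
Proof.
  intros (Hp & Hq & H).
  assert (p = q \/ Inv p q) as [<-|]; [|apply Inv_refl; auto|auto].
  clear Hp Hq.
  induction H as [x y Hs| x | x y _ IH | x y z _ IH1 _ IH2].
  - destruct Hs as (Hx & Hy & Hs). right. apply sim_Inv; auto.
  - left; auto.
  - destruct IH as [->|]; [left; auto|right; apply Inv_sym; auto].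
  - destruct IH1 as [->|]; destruct IH2 as [->|]; auto.
    right. eapply Inv_trans; eauto.
Qed.

Lemma toX (s : arr S) (x : pt A) : Dg A (s, x) -> Xs (star s) x ->
  simD A (s, x) (mul s (star s), theta s x).
Proof.
  intros Hp Hx. pose proof (idem_star _ (sidem' s)) as E.
  split; auto. split.
  - unfold Dg; simpl. rewrite E. destruct (sidem' s) as [_ ->].
    apply X_sub. apply theta_maps. auto.
  - unfold sim. left. rewrite E. split; [unfold composable; dcs|]. split.
    + rewrite sr. auto.
    + rewrite star_l. reflexivity.
Qed.

Lemma Inv_approx p q : Dg A p -> Dg A q -> Inv p q -> approx A p q.
Proof.
  intros Hp Hq H. split; auto. split; auto.
  destruct p as [s x], q as [t y]. unfold Inv, IA, IB in H; simpl in H.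
  destruct H as [H|(H1 & H2 & H3)].
  - apply rst_step. split; auto. split; auto. left; exact H.
  - pose proof (toX s x Hp H1) as K1. pose proof (toX t y Hq H2) as K2.
    eapply rst_trans; [apply rst_step; exact K1|].
    eapply rst_trans; [|apply rst_sym; apply rst_step; exact K2].
    apply rst_step. destruct K1 as (_ & K1 & _), K2 as (_ & K2 & _).
    split; auto. split; auto. right.
    split; [apply sidem'|]. split; [apply sidem'|]. auto.
Qed.

Lemma approx_sym p q : approx A p q -> approx A q p.
Proof. intros (? & ? & ?). split; auto. split; auto. apply rst_sym; auto. Qed.
Lemma approx_trans p q r : approx A p q -> approx A q r -> approx A p r.
Proof. intros (? & ? & ?) (? & ? & ?). split; auto. split; auto. eapply rst_trans; eauto. Qed.
Lemma approx_refl p : Dg A p -> approx A p p.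
Proof. intros. split; auto. split; auto. apply rst_refl. Qed.

Lemma step_fw (a b : arr S) (u v w : pt A) : simD A (a, u) (b, v) -> le w u ->
  exists w', le w' v /\ simD A (a, w) (b, w').
Proof.
  intros (Hp & Hq & H) Hw. unfold sim in H.
  destruct H as [(H1 & H2 & H3)|(Ia & Ib & ->)].
  - assert (Hw2 : Xs (mul (star a) b) w) by (eapply Xs_ideal; eauto).
    assert (Hle : le (theta (mul (star b) a) w) v).
    { rewrite <- H3. apply theta_order; try apply sXs; auto. }
    exists (theta (mul (star b) a) w). split; auto.
    split; [eapply Dg_ideal; eauto|]. split; [eapply Dg_ideal; eauto|].
    left. split; auto.
  - exists w. split; auto. split; [eapply Dg_ideal; eauto|]. split; [eapply Dg_ideal; eauto|].
    right. auto.
Qed.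

Lemma step_bw (a b : arr S) (u v w : pt A) : simD A (b, v) (a, u) -> le w u ->
  exists w', le w' v /\ simD A (b, w') (a, w).
Proof.
  intros (Hq & Hp & H) Hw. unfold sim in H.
  destruct H as [(H1 & H2 & H3)|(Ib & Ia & ->)].
  - assert (Hu : Xs (mul (star a) b) u).
    { rewrite <- H3. apply theta_maps. apply sXs; auto. }
    assert (Hw2 : Xs (mul (star a) b) w) by (eapply Xs_ideal; eauto).
    set (w' := theta (star (mul (star a) b)) w).
    assert (Hw' : Xs (star (mul (star a) b)) w') by (apply theta_inv_maps; auto).
    assert (Ew' : theta (mul (star a) b) w' = w) by (apply theta_inv_r; auto).
    assert (Hle : le w' v).
    { apply (theta_order S A (mul (star a) b)); auto. apply sXs; auto. congruence. }
    exists w'. split; auto.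
    split; [eapply Dg_ideal; eauto|]. split; [eapply Dg_ideal; eauto|].
    left. split; auto. split; auto. apply sXs; auto.
  - exists w. split; auto. split; [eapply Dg_ideal; eauto|]. split; [eapply Dg_ideal; eauto|].
    right. auto.
Qed.

Lemma transport p q : crst p q -> forall w, le w (snd p) ->
  exists w', le w' (snd q) /\ crst (fst p, w) (fst q, w').
Proof.
  intros H. apply clos_rst_rst1n in H.
  induction H as [x | x y z Hs _ IH]; intros w Hw.
  - exists w. split; auto. apply rst_refl.
  - destruct x as [a u], y as [b v]. simpl in *.
    assert (exists w1, le w1 v /\ crst (a, w) (b, w1)) as (w1 & Hw1 & C1).
    { destruct Hs as [Hs|Hs].
      - destruct (step_fw a b u v w Hs Hw) as (w1 & ? & ?). exists w1. split; auto.
        apply rst_step; auto.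
      - destruct (step_bw a b u v w Hs Hw) as (w1 & ? & ?). exists w1. split; auto.
        apply rst_sym, rst_step; auto. }
    destruct (IH w1 Hw1) as (w2 & Hw2 & C2). exists w2. split; auto.
    eapply rst_trans; eauto.
Qed.

Lemma Inv_inj (r : arr S) (a b : pt A) : Dg A (r, a) -> Inv (r, a) (r, b) -> a = b.
Proof.
  unfold Dg, Inv, IA, IB; simpl. intros H [(H1 & H2 & H3)|(H1 & H2 & H3)].
  - rewrite <- H3. symmetry. apply theta_idem; auto. apply sidem.
  - rewrite <- (theta_inv_l S A r a H1), <- (theta_inv_l S A r b H2), H3. reflexivity.
Qed.

End G.

Section M.
Context {S : invSemigroupoid} {A : ordPartialAction S}.

Lemma IB_IA (t u : arr S) (x y : pt A) : cod t = cod u -> IB t x u y -> IA t x u y.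
Proof.
  intros C (H1 & H2 & H3).
  assert (K : Xs (star (star u)) (theta t x)) by (rewrite star_star, H3; apply theta_maps; auto).
  destruct (theta_comp S A (star u) t x ltac:(unfold composable; dcs) H1 K) as [L E].
  split; [unfold composable; dcs|]. split.
  - apply sXs; auto. dcs.
  - rewrite E, H3. apply theta_inv_l; auto.
Qed.

Lemma A_left (s t u : arr S) (x y : pt A) : dom s = cod t -> dom s = cod u ->
  Xs (mul (star (mul s u)) (mul s u)) y ->
  Inv (t, x) (u, y) -> Inv (mul s t, x) (mul s u, y).
Proof.
  intros Ct Cu Hy HI.
  assert (HA : IA t x u y).
  { destruct HI as [H|H]; simpl in H; auto. apply IB_IA; auto. congruence. }
  destruct HA as (H1 & H2 & H3). left. simpl.
  set (k1 := mul (star (mul s u)) (mul s u)).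
  assert (X1 : Xs (star (mul (star u) t)) x) by (apply sXs; auto).
  assert (X2 : Xs (star k1) (theta (mul (star u) t) x))
    by (rewrite H3; unfold k1; rewrite (idem_star _ (sidem _)); auto).
  destruct (theta_comp S A k1 (mul (star u) t) x ltac:(unfold k1, composable; dcs) X1 X2) as [Hk Ek].
  destruct (key_e t u ltac:(dcs)) as [Ie Ke].
  assert (N : natle (mul k1 (mul (star u) t)) (mul (star (mul s u)) (mul s t))).
  { unfold k1. split; [dcs|]. split; [dcs|]. eexists. split; [exact Ie|].
    split; [unfold composable; dcs|].
    rewrite !star_mul by dcs. ra. rewrite Ke. reflexivity. }
  destruct (restrict _ _ x N Hk) as [Hm Em].
  split; [unfold composable; dcs|]. split.
  - rewrite star_mul, star_star in Hm by dcs. exact Hm.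
  - rewrite <- Em, Ek, H3. unfold k1. apply theta_idem; auto. apply sidem.
Qed.

Lemma back_Inv (s u : arr S) (w : pt A) : dom s = cod u ->
  Xs (mul (star (mul s u)) (mul s u)) w -> Inv (u, w) (mul (star s) (mul s u), w).
Proof.
  intros C H. left. simpl.
  assert (E1 : mul (star u) (mul (star s) (mul s u)) = mul (star (mul s u)) (mul s u))
    by (rewrite star_mul by dcs; ra; reflexivity).
  assert (E2 : mul (star (mul (star s) (mul s u))) u = mul (star (mul s u)) (mul s u)).
  { rewrite !star_mul, star_star by dcs. ra. try (rewrite srr by dcs). reflexivity. }
  split; [unfold composable; dcs|]. rewrite E1, E2. split; auto.
  apply theta_idem; auto. apply sidem.
Qed.

Lemma Dg_up (s u : arr S) (w : pt A) : dom s = cod u ->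
  Xs (mul (star (mul s u)) (mul s u)) w ->
  Xs (mul (star (mul (star s) (mul s u))) (mul (star s) (mul s u))) w.
Proof.
  intros C H.
  assert (E : mul (star (mul (star s) (mul s u))) (mul (star s) (mul s u)) = mul (star (mul s u)) (mul s u)).
  { rewrite !star_mul, star_star by dcs. ra. try (rewrite srr by dcs). reflexivity. }
  rewrite E. auto.
Qed.

Lemma Ds_Dg (s t : arr S) (x : pt A) : Ds A (star s) (t, x) ->
  dom s = cod t /\ Xs (mul (star (mul s t)) (mul s t)) x.
Proof.
  unfold Ds; simpl. intros (_ & H1 & H2). rewrite star_star in *. unfold composable in H1.
  split; auto. rewrite star_mul by dcs. exact H2.
Qed.

End M.

Theorem mainTheorem5 (S : invSemigroupoid) (A : ordPartialAction S) :
  (forall p p' q q', approx A p p' -> approx A q q' ->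
      leE A p q -> leE A p' q') /\
  (forall p, Dg A p -> leE A p p) /\
  (forall p q r, leE A p q -> leE A q r -> leE A p r) /\
  (forall p q, leE A p q -> leE A q p -> approx A p q) /\
  (forall s p q, Dg A p -> leE A p q -> inE A s q -> inE A s p) /\
  (forall s p q, Ds A (star s) p -> Ds A (star s) q ->
      leE A p q -> leE A (eta A s p) (eta A s q)) /\
  (forall s p q, Ds A (star s) p -> Ds A (star s) q ->
      leE A (eta A s p) (eta A s q) -> leE A p q).
Proof.
  split; [|split; [|split; [|split; [|split; [|split]]]]].
  - intros p p' q q' Hp Hq (r & y' & x' & D & H1 & H2 & H3).
    exists r, y', x'. split; auto. split; [eapply approx_trans; eauto|]. split; auto.
    eapply approx_trans; eauto.
  - intros [s x] D. exists s, x, x. split; auto. split; [apply approx_refl; auto|].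
    split; [apply le_refl|]. apply approx_refl; auto.
  - intros p q r (r1 & y1 & x1 & D1 & H1 & L1 & K1) (r2 & y2 & x2 & D2 & H2 & L2 & K2).
    assert (C : approx A (r1, y1) (r2, x2)) by (eapply approx_trans; eauto; apply approx_sym; auto).
    destruct C as (_ & Dx2 & C).
    destruct (transport _ _ C x1 L1) as (w & Lw & Cw). simpl in *.
    exists r2, y2, w. split; auto. split; auto. split; [eapply le_trans; eauto|].
    apply approx_trans with (r1, x1); [|auto].
    split; [eapply Dg_ideal; eauto|]. split; [destruct K1; auto|]. apply rst_sym; auto.
  - intros p q (r1 & y1 & x1 & D1 & H1 & L1 & K1) (r2 & y2 & x2 & D2 & H2 & L2 & K2).
    assert (C : approx A (r1, y1) (r2, x2)) by (eapply approx_trans; eauto; apply approx_sym; auto).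
    destruct C as (_ & Dx2 & C).
    destruct (transport _ _ C x1 L1) as (w & Lw & Cw). simpl in *.
    assert (Dw : Dg A (r2, w)) by (eapply Dg_ideal; eauto).
    assert (Aw : approx A (r2, w) (r2, y2)).
    { apply approx_trans with (r1, x1).
      - apply approx_sym. split; [destruct K1; auto|]. split; auto.
      - eapply approx_trans; eauto. apply approx_sym; auto. }
    pose proof (Inv_inj r2 w y2 Dw (approx_Inv _ _ Aw)) as ->.
    assert (x2 = y2) as -> by (apply le_antisym; auto; eapply le_trans; eauto).
    eapply approx_trans; [apply approx_sym; eauto|].
    eapply approx_trans; [|eauto]. apply approx_refl; auto.
  - intros s p q Dp (r & y' & x' & D & H1 & L & K) (q0 & Dq0 & Aq0).
    destruct q0 as [t z].
    assert (C : approx A (r, y') (t, z)) by (eapply approx_trans; eauto; apply approx_sym; auto).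
    destruct C as (_ & Dz & C).
    destruct (transport _ _ C x' L) as (w & Lw & Cw). simpl in *.
    exists (t, w). split.
    + destruct Dq0 as (D0 & C0 & X0). split; [eapply Dg_ideal; eauto|].
      split; auto. simpl in *. eapply Xs_ideal; eauto.
    + apply approx_trans with (r, x'); [|auto].
      split; [eapply Dg_ideal; eauto|]. split; [destruct K; auto|]. apply rst_sym; auto.
  - intros s [t x] [u y] Hp Hq (r & y' & x' & D & H1 & L & K).
    destruct (Ds_Dg s t x Hp) as [Ct Xt]. destruct (Ds_Dg s u y Hq) as [Cu Xu].
    destruct H1 as (_ & Dy & C).
    destruct (transport _ _ C x' L) as (w & Lw & Cw). simpl in *.
    assert (Dw : Dg A (u, w)) by (eapply Dg_ideal; eauto).
    assert (Aw : approx A (u, w) (t, x)).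
    { apply approx_trans with (r, x'); [|auto].
      split; auto. split; [destruct K; auto|]. apply rst_sym; auto. }
    assert (Xw : Xs (mul (star (mul s u)) (mul s u)) w) by (eapply Xs_ideal; eauto).
    pose proof (A_left s u t w x Cu Ct Xt (approx_Inv _ _ Aw)) as I.
    exists (mul s u), y, w. split; [exact Xu|]. split; [apply approx_refl; exact Xu|].
    split; auto. apply Inv_approx; auto.
  - intros s [t x] [u y] Hp Hq (r & y' & x' & D & H1 & L & K).
    destruct (Ds_Dg s t x Hp) as [Ct Xt]. destruct (Ds_Dg s u y Hq) as [Cu Xu].
    destruct H1 as (_ & Dy & C).
    destruct (transport _ _ C x' L) as (w & Lw & Cw). simpl in *.
    assert (Xw : Xs (mul (star (mul s u)) (mul s u)) w) by (eapply Xs_ideal; eauto).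
    assert (Aw : approx A (mul s u, w) (mul s t, x)).
    { apply approx_trans with (r, x'); [|auto].
      split; auto. split; [destruct K; auto|]. apply rst_sym; auto. }
    pose proof (A_left (star s) (mul s u) (mul s t) w x ltac:(dcs) ltac:(dcs)
                  (Dg_up s t x Ct Xt) (approx_Inv _ _ Aw)) as I.
    assert (I2 : Inv (u, w) (t, x)).
    { eapply Inv_trans; [apply back_Inv; eauto|].
      eapply Inv_trans; [exact I|]. apply Inv_sym. apply back_Inv; auto. }
    destruct Hp as (Dp & _), Hq as (Dq & _).
    exists u, y, w. split; auto. split; [apply approx_refl; auto|]. split; auto.
    apply Inv_approx; auto. eapply Dg_ideal; eauto.
Qed.
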